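(* Consider the safety strategy-improvement algorithm described in the context, run on a concurrent game structure $G$ with safe set $F$. For $i\ge 0$, let $\gamma_i$ and $\gamma_{i+1}$ be the player-1 selectors obtained at iterations $i$ and $i+1$. If $\gamma_i\ne\gamma_{i+1}$, then (a) for all $s\in S$, $\mathrm{val}_1^{\overline{\gamma}_i}(\mathrm{Safe}(F))(s)\le\mathrm{val}_1^{\overline{\gamma}_{i+1}}(\mathrm{Safe}(F))(s)$; and (b) for some $s^*\in S$, $\mathrm{val}_1^{\overline{\gamma}_i}(\mathrm{Safe}(F))(s^* )<\mathrm{val}_1^{\overline{\gamma}_{i+1}}(\mathrm{Safe}(F))(s^* )$.
   Context: Concurrent game structure $G=(S,M,\Gamma_1,\Gamma_2,\delta)$: finite states $S$, finite moves $M$, nonempty move sets $\Gamma_i(s)\subseteq M$, $\delta(s,a_1,a_2)\in\mathrm{Distr}(S)$ (simultaneous independent moves); $\mathrm{Dest}(s,a_1,a_2)=\mathrm{supp}\,\delta(s,a_1,a_2)$. A state is absorbing if every move pair leads back to it with probability 1. A selector for player $i$ assigns to each state $s$ a distribution on $\Gamma_i(s)$ (a selector at $s$ is such a distribution); $\overline{\xi}$ is the memoryless strategy playing $\xi$ forever. $\mathrm{Safe}(F)$ is the set of plays that stay in $F$ forever; $\mathrm{val}_1^{\pi_1}(\mathrm{Safe}(F))(s)=\inf_{\pi_2}\Pr_s^{\pi_1,\pi_2}(\mathrm{Safe}(F))$, $\mathrm{val}_1(\mathrm{Safe}(F))=\sup_{\pi_1}\mathrm{val}_1^{\pi_1}(\mathrm{Safe}(F))$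 (over all strategies). For a valuation $v:S\to[0,1]$ and selectors: $\mathrm{Pre}_{\xi_1,\xi_2}(v)(s)=\sum_{a,b}\sum_t v(t)\delta(s,a,b)(t)\xi_1(s)(a)\xi_2(s)(b)$; $\mathrm{Pre}_{\xi_1,b}$ uses the point mass on move $b$ for player 2; $\mathrm{Pre}_{1:\xi_1}(v)(s)=\inf_{\xi_2}\mathrm{Pre}_{\xi_1,\xi_2}(v)(s)$; $\mathrm{Pre}_1(v)(s)=\sup_{\xi_1}\mathrm{Pre}_{1:\xi_1}(v)(s)$. Let $T=S\setminus F$ and $W_1=\{s:\mathrm{val}_1(\mathrm{Safe}(F))(s)=1\}$; standing assumption: all states of $W_1\cup T$ are absorbing. $\mathrm{OptSel}(v,s)=\{\xi_1\text{ selector at }s:\mathrm{Pre}_{1:\xi_1}(v)(s)=\mathrm{Pre}_1(v)(s)\}$; for $\xi_1\in\mathrm{OptSel}(v,s)$, $\mathrm{CountOpt}(v,s,\xi_1)=\{b\in\Gamma_2(s):\mathrm{Pre}_{\xi_1,b}(v)(s)=\mathrm{Pre}_1(v)(s)\}$; $\mathrm{OptSelCount}(v,s)$ is the set of pairs $(A,B)$ with $A\subseteq\Gamma_1(s)$, $B\subseteq\Gamma_2(s)$ such that some $\xi_1\in\mathrm{OptSel}(v,s)$ has support $A$ and $\mathrm{CountOpt}(v,s,\xi_1)=B$. Turn-based reduction $\mathrm{TB}(G,v,F)=(\overline{G}_v,\overline{F})$: a turn-based stochastic game (a graph whose states are partitioned into player-1 states, where player 1 picks the successor, player-2 states, where player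 2 picks, and random states, where the successor is drawn at random) with player-1 states $S$, player-2 states $(s,A,B)$ for $(A,B)\in\mathrm{OptSelCount}(v,s)$, random states $(s,A,b)$ for such $(A,B)$ and $b\in B$; edges $s\to(s,A,B)$, $(s,A,B)\to(s,A,b)$ for $b\in B$, and $(s,A,b)\to t$ for $t\in\bigcup_{a\in A}\mathrm{Dest}(s,a,b)$, random states choosing uniformly among successors. $\overline{F}=F\cup\{(s,A,B):s\in F\}\cup\{(s,A,b):s\in F\}$. The almost-sure winning states for $\mathrm{Safe}(\overline{F})$ are those from which player 1 has a strategy ensuring $\mathrm{Safe}(\overline{F})$ with probability 1 against all player-2 strategies. Algorithm: $\gamma_0=\xi^{\mathrm{unif}}$ (uniform over $\Gamma_1(s)$ at every $s$); $v_i=\mathrm{val}_1^{\overline{\gamma}_i}(\mathrm{Safe}(F))$. At iteration $i$: let $I=\{s\in S\setminus(W_1\cup T):\mathrm{Pre}_1(v_i)(s)>v_i(s)\}$. If $I\ne\emptyset$: take a selector $\xi_1$ with $\mathrm{Pre}_{1:\xi_1}(v_i)(s)=\mathrm{Pre}_1(v_i)(s)$ for $s\in I$ and let $\gamma_{i+1}=\xi_1$ on $I$, $=\gamma_i$ elsewhere. Otherwise: compute $(\overline{G}_{v_i},\overline{F})=\mathrm{TB}(G,v_i,F)$, the set $\overline{A}_i$ of almost-sure winning states for $\mathrm{Safe}(\overline{F})$ and a pure memoryless almost-sure winning strategy $\overline{\pi}_1$ from $\overline{A}_i$; let $U=(\overline{A}_i\cap S)\setminus W_1$; if $U\ne\emptyset$,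 let $\gamma_{i+1}=\gamma_i$ outside $U$ and, for $s\in U$ with $\overline{\pi}_1(s)=(s,A,B)$, let $\gamma_{i+1}(s)$ be a selector $\xi\in\mathrm{OptSel}(v_i,s)$ with support $A$ and $\mathrm{CountOpt}(v_i,s,\xi)=B$. The algorithm stops, returning $\overline{\gamma}_i$, when $I=\emptyset$ and $U=\emptyset$. *)

(* Defs.v *)
From HB Require Import structures.
From mathcomp Require Import all_boot all_order all_algebra.
From mathcomp Require Import boolp classical_sets reals.
Set Implicit Arguments. Unset Strict Implicit. Unset Printing Implicit Defensive.
Import Order.TTheory GRing.Theory Num.Theory.
Local Open Scope ring_scope.

Definition distr_on (R : realType) (T : finType) (A : {set T}) (d : T -> R) : Prop :=
  [/\ forall x, 0 <= d x, forall x, x \notin A -> d x = 0 & \sum_(x : T) d x = 1].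

Record cgs (R : realType) (S M : finType) := CGS {
  mov1 : S -> {set M};
  mov2 : S -> {set M};
  delta : S -> M -> M -> S -> R;
  mov1_nonempty : forall s, mov1 s != finset.set0;
  mov2_nonempty : forall s, mov2 s != finset.set0;
  delta_distr : forall s a b, distr_on (finset.setT) (delta s a b) }.

Section Concurrent.
Variables (R : realType) (S M : finType) (G : cgs R S M).

(* A (history-dependent, randomized) strategy: given the initial state s0
   and the subsequent states h of the history, a distribution on moves
   at the current state  last s0 h. *)
Definition strategy := S -> seq S -> M -> R.
Definition is_strat1 (p : strategy) := forall s0 h, distr_on (mov1 G (last s0 h)) (p s0 h).
Definition is_strat2 (p : strategy) := forall s0 h, distr_on (mov2 G (last s0 h)) (p s0 h).

Definition selector := S -> M -> R.
Definition is_sel1 (xi : selector) := forall s, distr_on (mov1 G s) (xi s).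
Definition mless (xi : selector) : strategy := fun s0 h => xi (last s0 h).

Fixpoint stay (F : {set S}) (p1 p2 : strategy) (n : nat) (s0 : S) (h : seq S) : R :=
  if last s0 h \in F then
    match n with
    | 0 => 1
    | n'.+1 => \sum_(a : M) \sum_(b : M) \sum_(t : S)
                 p1 s0 h a * p2 s0 h b * delta G (last s0 h) a b t
                 * stay F p1 p2 n' s0 (rcons h t)
    end
  else 0.

(* Pr_s^{p1,p2}(Safe(F)): the measure of the decreasing intersection of the
   cylinder events "first n steps in F" *)
Definition prSafe (F : {set S}) (p1 p2 : strategy) (s : S) : R :=
  inf (range (fun n => stay F p1 p2 n s [::])).

Definition val1_strat (F : {set S}) (p1 : strategy) (s : S) : R :=
  inf ([set r | exists2 p2, is_strat2 p2 & r = prSafe F p1 p2 s])%classic.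

Definition val1 (F : {set S}) (s : S) : R :=
  sup ([set r | exists2 p1, is_strat1 p1 & r = val1_strat F p1 s])%classic.

Definition val_sel (F : {set S}) (xi : selector) (s : S) : R :=
  val1_strat F (mless xi) s.

Definition W1 (F : {set S}) (s : S) : Prop := val1 F s = 1.

Definition absorbing (s : S) : Prop :=
  forall a b, a \in mov1 G s -> b \in mov2 G s -> delta G s a b s = 1.

Definition unif_sel : selector :=
  fun s a => if a \in mov1 G s then (#|mov1 G s|%:R)^-1 else 0.

Definition Pre2 (v : S -> R) (s : S) (x1 x2 : M -> R) : R :=
  \sum_(a : M) \sum_(b : M) \sum_(t : S) v t * delta G s a b t * x1 a * x2 b.

Definition ptmass (b : M) : M -> R := fun b' => if b' == b then 1 else 0.

Definition Pre1sel (v : S -> R) (s : S) (x1 : M -> R) : R :=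
  inf ([set r | exists2 x2, distr_on (mov2 G s) x2 & r = Pre2 v s x1 x2])%classic.

Definition Pre1 (v : S -> R) (s : S) : R :=
  sup ([set r | exists2 x1, distr_on (mov1 G s) x1 & r = Pre1sel v s x1])%classic.

Definition OptSel (v : S -> R) (s : S) (x1 : M -> R) : Prop :=
  distr_on (mov1 G s) x1 /\ Pre1sel v s x1 = Pre1 v s.

Definition CountOpt (v : S -> R) (s : S) (x1 : M -> R) : {set M} :=
  [set b in mov2 G s | Pre2 v s x1 (ptmass b) == Pre1 v s].

Definition supp (x1 : M -> R) : {set M} := [set a | x1 a != 0].

Definition OptSelCount (v : S -> R) (s : S) (A B : {set M}) : Prop :=
  exists x1, [/\ OptSel v s x1, supp x1 = A & CountOpt v s x1 = B].

End Concurrent.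

Inductive owner := Pl1 | Pl2 | Rnd.

Record tbgame (V : finType) := TBG { own : V -> owner; succ : V -> {set V} }.

Section TurnBased.
Variables (R : realType) (V : finType) (g : tbgame V).

Definition tstrategy := V -> seq V -> V -> R.
Definition is_tstrat (pl : owner) (p : tstrategy) :=
  forall v0 h, own g (last v0 h) = pl -> distr_on (succ g (last v0 h)) (p v0 h).

Definition ttrans (p1 p2 : tstrategy) (v0 : V) (h : seq V) (w : V) : R :=
  match own g (last v0 h) with
  | Pl1 => p1 v0 h w
  | Pl2 => p2 v0 h w
  | Rnd => if w \in succ g (last v0 h) then (#|succ g (last v0 h)|%:R)^-1 else 0
  end.

Fixpoint tstay (Fb : {set V}) (p1 p2 : tstrategy) (n : nat) (v0 : V) (h : seq V) : R :=
  if last v0 h \in Fb then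
    match n with
    | 0 => 1
    | n'.+1 => \sum_(w : V) ttrans p1 p2 v0 h w * tstay Fb p1 p2 n' v0 (rcons h w)
    end
  else 0.

Definition tprSafe (Fb : {set V}) (p1 p2 : tstrategy) (v : V) : R :=
  inf (range (fun n => tstay Fb p1 p2 n v [::])).

Definition as_win (Fb : {set V}) : set V :=
  (fun v => exists2 p1, is_tstrat Pl1 p1 &
           forall p2, is_tstrat Pl2 p2 -> tprSafe Fb p1 p2 v = 1).

Definition pm_strat (f : V -> V) : tstrategy :=
  fun v0 h w => if w == f (last v0 h) then 1 else 0.

Definition pm_as_winning (Fb : {set V}) (A : set V) (f : V -> V) : Prop :=
  (forall v, own g v = Pl1 -> f v \in succ g v) /\
  (forall v, A v -> forall p2, is_tstrat Pl2 p2 -> tprSafe Fb (pm_strat f) p2 v = 1).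

End TurnBased.

(* vertices: inl (inl s)           player-1 state s                    *)
(*           inl (inr (s, A, B))   player-2 state (s,A,B)              *)
(*           inr (s, A, b)         random state (s,A,b)                *)
(* Vertices (s,A,B) with (A,B) not in OptSelCount, etc., are junk:     *)
(* unreachable from valid vertices.                                    *)
Definition TBV (S M : finType) : finType :=
  ((S + (S * {set M} * {set M})) + (S * {set M} * M))%type.

Section Reduction.
Variables (R : realType) (S M : finType) (G : cgs R S M).

Definition tb_own (w : TBV S M) : owner :=
  match w with inl (inl _) => Pl1 | inl (inr _) => Pl2 | inr _ => Rnd end.

Definition tb_succ_raw (v : S -> R) (w : TBV S M) : {set TBV S M} :=
  match w with
  | inl (inl s) =>
      [set w' : TBV S M | match w' with
                          | inl (inr (s', A, B)) => (s' == s) && `[< OptSelCount G v s A B >]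
                          | _ => false end]
  | inl (inr (s, A, B)) =>
      [set w' : TBV S M | match w' with
                          | inr (s', A', b) => [&& s' == s, A' == A & b \in B]
                          | _ => false end]
  | inr (s, A, b) =>
      [set w' : TBV S M | match w' with
                          | inl (inl t) => [exists a in A, 0 < delta G s a b t]
                          | _ => false end]
  end.

(* a self-loop is added only at vertices that would otherwise be dead ends
   (this never happens at valid vertices) *)
Definition tb_succ (v : S -> R) (w : TBV S M) : {set TBV S M} :=
  if tb_succ_raw v w == finset.set0 then finset.set1 w else tb_succ_raw v w.

Definition TBgame (v : S -> R) : tbgame (TBV S M) := TBG tb_own (tb_succ v).

Definition TBsafe (F : {set S}) : {set TBV S M} :=
  [set w : TBV S M | match w with
                     | inl (inl s) => s \in F
                     | inl (inr (s, _, _)) => s \in F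
                     | inr (s, _, _) => s \in F end].

(* One iteration of the strategy-improvement algorithm: gam' is a     *)
(* possible gamma_{i+1} obtained from gam = gamma_i (the algorithm did *)
(* not stop at iteration i).                                          *)
Definition Iset (F : {set S}) (gam : selector R S M) (s : S) : Prop :=
  let v := val_sel G F gam in
  [/\ ~ W1 G F s, s \in F & v s < Pre1 G v s].

Definition alg_step (F : {set S}) (gam gam' : selector R S M) : Prop :=
  let v := val_sel G F gam in
  ((exists s, Iset F gam s) /\
     (forall s, Iset F gam s -> distr_on (mov1 G s) (gam' s) /\ Pre1sel G v s (gam' s) = Pre1 G v s) /\
     (forall s, ~ Iset F gam s -> gam' s = gam s))
  \/
  ((forall s, ~ Iset F gam s) /\
   exists f : TBV S M -> TBV S M,
     let Abar := as_win R (TBgame v) (TBsafe F) in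
     let U := fun s => Abar (inl (inl s)) /\ ~ W1 G F s in
     [/\ pm_as_winning R (TBgame v) (TBsafe F) Abar f,
         exists s, U s,
         forall s, ~ U s -> gam' s = gam s &
         forall s, U s ->
           match f (inl (inl s)) with
           | inl (inr (_, A, B)) =>
               [/\ OptSel G v s (gam' s), supp (gam' s) = A & CountOpt G v s (gam' s) = B]
           | _ => False
           end]).

End Reduction.

(* Main.v *)
Require Import Defs.
From HB Require Import structures.
From mathcomp Require Import all_boot all_order all_algebra.
From mathcomp Require Import boolp classical_sets reals.
From mathcomp Require Import ring lra.
Import Order.TTheory GRing.Theory Num.Theory.
Set Implicit Arguments. Unset Strict Implicit. Unset Printing Implicit Defensive.
Local Open Scope ring_scope.

Section Gen.
Variable R : realType.

Lemma inf_lowerE (E : set R) c x : (forall y, E y -> c <= y) -> E x -> inf E <= x.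
Proof. move=> lb Ex; apply: (ge_inf (E:=E)) => //; exists c => y Ey; exact: lb. Qed.

Lemma le_infE (E : set R) c : (exists x, E x) -> (forall y, E y -> c <= y) -> c <= inf E.
Proof. by move=> [x Ex] lb; apply: lb_le_inf; [exists x|move=> y Ey; exact: lb]. Qed.

Lemma sup_upperE (E : set R) c x : (forall y, E y -> y <= c) -> E x -> x <= sup E.
Proof. move=> ub Ex; apply: (ub_le_sup (E:=E)) => //; exists c => y Ey; exact: ub. Qed.

Lemma ge_supE (E : set R) c : (exists x, E x) -> (forall y, E y -> y <= c) -> sup E <= c.
Proof. by move=> [x Ex] ub; apply: ge_sup; [exists x|move=> y Ey; exact: ub]. Qed.

Lemma conv_le (T : finType) (w f : T -> R) c :
  (forall x, 0 <= w x) -> \sum_x w x = 1 -> (forall x, w x != 0 -> f x <= c) ->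
  \sum_x w x * f x <= c.
Proof.
move=> w0 w1 fc; apply: (@le_trans _ _ (\sum_x w x * c)).
  apply: ler_sum => x _; have [->|/fc h] := eqVneq (w x) 0; first by rewrite !mul0r.
  by rewrite ler_wpM2l.
by rewrite -mulr_suml w1 mul1r.
Qed.

Lemma conv_ge (T : finType) (w f : T -> R) c :
  (forall x, 0 <= w x) -> \sum_x w x = 1 -> (forall x, w x != 0 -> c <= f x) ->
  c <= \sum_x w x * f x.
Proof.
move=> w0 w1 fc; apply: (@le_trans _ _ (\sum_x w x * c)).
  by rewrite -mulr_suml w1 mul1r.
apply: ler_sum => x _; have [->|/fc h] := eqVneq (w x) 0; first by rewrite !mul0r.
by rewrite ler_wpM2l.
Qed.

Lemma distr_ge0 (T : finType) (A : {set T}) (d : T -> R) x : distr_on A d -> 0 <= d x.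
Proof. by case. Qed.
Lemma distr_out (T : finType) (A : {set T}) (d : T -> R) x : distr_on A d -> x \notin A -> d x = 0.
Proof. by case=> _ h _; exact: h. Qed.
Lemma distr_sum (T : finType) (A : {set T}) (d : T -> R) : distr_on A d -> \sum_x d x = 1.
Proof. by case. Qed.
Lemma distr_in (T : finType) (A : {set T}) (d : T -> R) x : distr_on A d -> d x != 0 -> x \in A.
Proof. by move=> D; apply: contraR => /(distr_out D) ->; rewrite eqxx. Qed.

Lemma ptmass_distr (T : finType) (A : {set T}) (b : T) : b \in A ->
  distr_on A (fun x => if x == b then (1:R) else 0).
Proof.
move=> bA; split.
- by move=> x; case: ifP.
- by move=> x xA; case: eqP => // e; move: xA; rewrite e bA.
- by rewrite (bigD1 b) //= eqxx big1 ?addr0 // => x /negbTE ->.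
Qed.

Lemma sum_ptmass (T : finType) (b : T) (K : T -> R) :
  \sum_x (if x == b then (1:R) else 0) * K x = K b.
Proof. by rewrite (bigD1 b) //= eqxx mul1r big1 ?addr0 // => x /negbTE ->; rewrite mul0r. Qed.

Lemma unif_distr (T : finType) (A : {set T}) : A != finset.set0 ->
  distr_on A (fun x => if x \in A then (#|A|%:R)^-1 else (0:R)).
Proof.
move=> An0; split.
- by move=> x; case: ifP => // _; rewrite invr_ge0.
- by move=> x /negbTE ->.
- rewrite -big_mkcond /= sumr_const -[_ *+ _]mulr_natl mulfV //.
  by rewrite pnatr_eq0 -lt0n card_gt0.
Qed.

End Gen.
Section Game.
Variables (R : realType) (S M : finType) (G : cgs R S M).

Lemma delta_ge0 s a b t : 0 <= delta G s a b t.
Proof. exact: (distr_ge0 _ (delta_distr G s a b)). Qed.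
Lemma delta_sum s a b : \sum_t delta G s a b t = 1.
Proof. exact: (distr_sum (delta_distr G s a b)). Qed.

Lemma Pre2E v s x1 x2 : Pre2 G v s x1 x2 =
  \sum_a x1 a * \sum_b x2 b * \sum_t delta G s a b t * v t.
Proof.
rewrite /Pre2; apply: eq_bigr => a _; rewrite mulr_sumr; apply: eq_bigr => b _.
by rewrite !mulr_sumr; apply: eq_bigr => t _; ring.
Qed.

Lemma Pre2_le f g s x1 x2 : (forall x, 0 <= x1 x) -> (forall x, 0 <= x2 x) ->
  (forall t, f t <= g t) -> Pre2 G f s x1 x2 <= Pre2 G g s x1 x2.
Proof.
move=> h1 h2 fg; rewrite !Pre2E; apply: ler_sum => a _; apply: ler_wpM2l => //.
apply: ler_sum => b _; apply: ler_wpM2l => //.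
by apply: ler_sum => t _; apply: ler_wpM2l => //; apply: delta_ge0.
Qed.

Lemma Pre2_const c s x1 x2 : \sum_a x1 a = 1 -> \sum_b x2 b = 1 ->
  Pre2 G (fun _ => c) s x1 x2 = c.
Proof.
move=> h1 h2; rewrite Pre2E.
under eq_bigr => a _ do under eq_bigr => b _ do rewrite -mulr_suml delta_sum mul1r.
under eq_bigr => a _ do rewrite -mulr_suml h2 mul1r.
by rewrite -mulr_suml h1 mul1r.
Qed.

Lemma Pre2_add f g s x1 x2 :
  Pre2 G (fun t => f t + g t) s x1 x2 = Pre2 G f s x1 x2 + Pre2 G g s x1 x2.
Proof.
rewrite /Pre2 -big_split; apply: eq_bigr => a _; rewrite -big_split.
apply: eq_bigr => b _; rewrite -big_split; apply: eq_bigr => t _ /=; ring.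
Qed.

Lemma Pre2_scale k f s x1 x2 :
  Pre2 G (fun t => k * f t) s x1 x2 = k * Pre2 G f s x1 x2.
Proof.
rewrite /Pre2 mulr_sumr; apply: eq_bigr => a _; rewrite mulr_sumr.
apply: eq_bigr => b _; rewrite mulr_sumr; apply: eq_bigr => t _; ring.
Qed.

Lemma Pre2_affine k c f s x1 x2 : \sum_a x1 a = 1 -> \sum_b x2 b = 1 ->
  Pre2 G (fun t => k * f t + c) s x1 x2 = k * Pre2 G f s x1 x2 + c.
Proof. by move=> h1 h2; rewrite Pre2_add Pre2_scale Pre2_const. Qed.

Lemma Pre2_pt v s x1 x2 :
  Pre2 G v s x1 x2 = \sum_b x2 b * Pre2 G v s x1 (ptmass R b).
Proof.
rewrite Pre2E; under [RHS]eq_bigr => b _ do rewrite Pre2E /ptmass.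
under [RHS]eq_bigr => b _ do under eq_bigr => a _ do rewrite sum_ptmass.
under [RHS]eq_bigr => b _ do rewrite mulr_sumr.
rewrite exchange_big; apply: eq_bigr => a _; rewrite mulr_sumr.
by apply: eq_bigr => b _; ring.
Qed.

Lemma Pre2_supp f g s x1 x2 :
  (forall a b t, x1 a != 0 -> x2 b != 0 -> delta G s a b t != 0 -> f t = g t) ->
  Pre2 G f s x1 x2 = Pre2 G g s x1 x2.
Proof.
move=> H; apply: eq_bigr => a _; apply: eq_bigr => b _; apply: eq_bigr => t _.
have [->|h1] := eqVneq (x1 a) 0; first by rewrite !(mulr0, mul0r).
have [->|h2] := eqVneq (x2 b) 0; first by rewrite !(mulr0, mul0r).
have [->|h3] := eqVneq (delta G s a b t) 0; first by rewrite !(mulr0, mul0r).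
by rewrite (H a b t).
Qed.

Definition unif2 : strategy R S M := fun s0 h b =>
  if b \in mov2 G (last s0 h) then (#|mov2 G (last s0 h)|%:R)^-1 else 0.

Lemma unif2_valid : is_strat2 G unif2.
Proof. move=> s0 h; exact: unif_distr (mov2_nonempty G _). Qed.

Lemma exists_distr2 s : exists x2 : M -> R, distr_on (mov2 G s) x2.
Proof. exists (unif2 s [::]); exact: (unif2_valid s [::]). Qed.

Lemma unif_sel_valid : is_sel1 G (unif_sel G).
Proof. move=> s; exact: unif_distr (mov1_nonempty G _). Qed.

Lemma mless_valid g : is_sel1 G g -> is_strat1 G (mless g).
Proof. by move=> h s0 hh; apply: h. Qed.

Lemma Pre2_ge0 f s x1 x2 : (forall x, 0 <= x1 x) -> (forall x, 0 <= x2 x) ->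
  (forall t, 0 <= f t) -> 0 <= Pre2 G f s x1 x2.
Proof.
move=> h1 h2 hf; rewrite /Pre2; apply: sumr_ge0 => a _; apply: sumr_ge0 => b _.
apply: sumr_ge0 => t _; rewrite !mulr_ge0 //; exact: delta_ge0.
Qed.

Lemma Pre1sel_le f s x1 x2 : (forall x, 0 <= x1 x) -> (forall t, 0 <= f t) ->
  distr_on (mov2 G s) x2 -> Pre1sel G f s x1 <= Pre2 G f s x1 x2.
Proof.
move=> h1 hf D; apply: (inf_lowerE (c := 0)); last by exists x2.
move=> y [x2' D' ->]; apply: Pre2_ge0 => // x; exact: distr_ge0 D'.
Qed.

Lemma Pre1sel_ge c f s x1 :
  (forall x2, distr_on (mov2 G s) x2 -> c <= Pre2 G f s x1 x2) -> c <= Pre1sel G f s x1.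
Proof.
move=> H; apply: le_infE.
  by have [x2 D] := exists_distr2 s; exists (Pre2 G f s x1 x2); exists x2.
by move=> y [x2 D ->]; apply: H.
Qed.

Lemma Pre1sel_mono f g s x1 : (forall x, 0 <= x1 x) -> (forall t, 0 <= f t) ->
  (forall t, f t <= g t) -> Pre1sel G f s x1 <= Pre1sel G g s x1.
Proof.
move=> h1 hf fg; apply: Pre1sel_ge => x2 D; apply: le_trans (Pre1sel_le h1 hf D) _.
apply: Pre2_le => // x; exact: distr_ge0 D.
Qed.

Lemma Pre1sel_le1 f s x1 : distr_on (mov1 G s) x1 -> (forall t, 0 <= f t <= 1) ->
  Pre1sel G f s x1 <= 1.
Proof.
move=> D1 hf; have [x2 D2] := exists_distr2 s.
have h1 : forall x, 0 <= x1 x by move=> x; exact: distr_ge0 D1.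
apply: le_trans (Pre1sel_le h1 _ D2) _; first by move=> t; case/andP: (hf t).
rewrite -(Pre2_const 1 s (distr_sum D1) (distr_sum D2)).
apply: Pre2_le => // [x|t]; first exact: distr_ge0 D2.
by case/andP: (hf t).
Qed.

Lemma Pre1_ge f s x1 : distr_on (mov1 G s) x1 -> (forall t, 0 <= f t <= 1) ->
  Pre1sel G f s x1 <= Pre1 G f s.
Proof.
move=> D hf; apply: (sup_upperE (c := 1)); last by exists x1.
move=> y [x1' D' ->]; exact: Pre1sel_le1.
Qed.

End Game.
Section Stay.
Variables (R : realType) (S M : finType) (G : cgs R S M) (F : {set S}).

Lemma stay_out p1 p2 n s0 h : last s0 h \notin F -> stay G F p1 p2 n s0 h = 0.
Proof. by move=> H; case: n => [|n] /=; rewrite (negbTE H). Qed.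

Lemma stay_succ p1 p2 n s0 h : last s0 h \in F ->
  stay G F p1 p2 n.+1 s0 h =
  Pre2 G (fun t => stay G F p1 p2 n s0 (rcons h t)) (last s0 h) (p1 s0 h) (p2 s0 h).
Proof.
move=> H /=; rewrite H /Pre2; apply: eq_bigr => a _; apply: eq_bigr => b _.
by apply: eq_bigr => t _; ring.
Qed.

Lemma stay0 p1 p2 s0 h : last s0 h \in F -> stay G F p1 p2 0 s0 h = 1.
Proof. by move=> H /=; rewrite H. Qed.

Variables (p1 p2 : strategy R S M).
Hypotheses (V1 : is_strat1 G p1) (V2 : is_strat2 G p2).

Lemma stay_bnd n s0 h : 0 <= stay G F p1 p2 n s0 h <= 1.
Proof.
elim: n h => [|n IH] h.
  by case: (boolP (last s0 h \in F)) => H; [rewrite stay0 // ler01 lexx | rewrite stay_out // lexx ler01].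
case: (boolP (last s0 h \in F)) => H; last by rewrite stay_out // lexx ler01.
have h1 : forall x, 0 <= p1 s0 h x by move=> x; exact: distr_ge0 (V1 s0 h).
have h2 : forall x, 0 <= p2 s0 h x by move=> x; exact: distr_ge0 (V2 s0 h).
have s1 := distr_sum (V1 s0 h); have s2 := distr_sum (V2 s0 h).
rewrite stay_succ //; apply/andP; split.
  by rewrite -(Pre2_const G 0 (last s0 h) s1 s2); apply: Pre2_le => // t; case/andP: (IH (rcons h t)).
by rewrite -(Pre2_const G 1 (last s0 h) s1 s2); apply: Pre2_le => // t; case/andP: (IH (rcons h t)).
Qed.

Lemma stay_mono1 n s0 h : stay G F p1 p2 n.+1 s0 h <= stay G F p1 p2 n s0 h.
Proof.
elim: n h => [|n IH] h; case: (boolP (last s0 h \in F)) => H;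
  try by rewrite !stay_out // lexx.
  by rewrite stay0 //; case/andP: (stay_bnd 1 s0 h).
have h1 : forall x, 0 <= p1 s0 h x by move=> x; exact: distr_ge0 (V1 s0 h).
have h2 : forall x, 0 <= p2 s0 h x by move=> x; exact: distr_ge0 (V2 s0 h).
rewrite !(stay_succ _ _ _ H); exact: Pre2_le.
Qed.

Lemma stay_mono n m s0 h : (n <= m)%N -> stay G F p1 p2 m s0 h <= stay G F p1 p2 n s0 h.
Proof.
move/subnK <-; elim: (m - n)%N => [|k IH] //; rewrite addSn.
exact: le_trans (stay_mono1 _ _ _) IH.
Qed.

Lemma prSafe_le n s : prSafe G F p1 p2 s <= stay G F p1 p2 n s [::].
Proof.
apply: (inf_lowerE (c := 0)); last by exists n.
by move=> y [m _ <-]; case/andP: (stay_bnd m s [::]).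
Qed.

Lemma prSafe_ge c s : (forall n, c <= stay G F p1 p2 n s [::]) -> c <= prSafe G F p1 p2 s.
Proof.
move=> H; apply: le_infE; first by exists (stay G F p1 p2 0 s [::]); exists 0%N.
by move=> y [m _ <-].
Qed.

Lemma prSafe_bnd s : 0 <= prSafe G F p1 p2 s <= 1.
Proof.
apply/andP; split; first by apply: prSafe_ge => n; case/andP: (stay_bnd n s [::]).
by apply: le_trans (prSafe_le 0 s) _; case/andP: (stay_bnd 0 s [::]).
Qed.

End Stay.

Section Shift.
Variables (R : realType) (S M : finType) (G : cgs R S M) (F : {set S}).

Definition sh (s : S) (p : strategy R S M) : strategy R S M := fun t0 h0 => p s (t0 :: h0).

Lemma stay_shift p1 p2 n s t h :
  stay G F p1 p2 n s (t :: h) = stay G F (sh s p1) (sh s p2) n t h.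
Proof.
elim: n h => [|n IH] h //=; case: ifP => // _.
apply: eq_bigr => a _; apply: eq_bigr => b _; apply: eq_bigr => x _.
by rewrite IH.
Qed.

Lemma stay_start p1 p2 q1 q2 n t h :
  (forall h a, p1 t h a = q1 t h a) -> (forall h a, p2 t h a = q2 t h a) ->
  stay G F p1 p2 n t h = stay G F q1 q2 n t h.
Proof.
move=> E1 E2; elim: n h => [|n IH] h //=; case: ifP => // _.
apply: eq_bigr => a _; apply: eq_bigr => b _; apply: eq_bigr => x _.
by rewrite IH E1 E2.
Qed.

End Shift.
Section Val.
Variables (R : realType) (S M : finType) (G : cgs R S M) (F : {set S}).

Lemma val_le p1 p2 s : is_strat1 G p1 -> is_strat2 G p2 ->
  val1_strat G F p1 s <= prSafe G F p1 p2 s.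
Proof.
move=> V1 V2; apply: (inf_lowerE (c := 0)); last by exists p2.
by move=> y [q Vq ->]; case/andP: (prSafe_bnd F V1 Vq s).
Qed.

Lemma val_ge c p1 s : (forall p2, is_strat2 G p2 -> c <= prSafe G F p1 p2 s) ->
  c <= val1_strat G F p1 s.
Proof.
move=> H; apply: le_infE.
  by exists (prSafe G F p1 (unif2 G) s); exists (unif2 G) => //; exact: unif2_valid.
by move=> y [q Vq ->]; apply: H.
Qed.

Lemma val_bnd p1 s : is_strat1 G p1 -> 0 <= val1_strat G F p1 s <= 1.
Proof.
move=> V1; apply/andP; split.
  by apply: val_ge => p2 V2; case/andP: (prSafe_bnd F V1 V2 s).
apply: le_trans (val_le s V1 (unif2_valid G)) _.
by case/andP: (prSafe_bnd F V1 (unif2_valid G) s).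
Qed.

Lemma val_out p1 s : is_strat1 G p1 -> s \notin F -> val1_strat G F p1 s = 0.
Proof.
move=> V1 H; apply/le_anti/andP; split; last by case/andP: (val_bnd s V1).
apply: le_trans (val_le s V1 (unif2_valid G)) _.
apply: le_trans (prSafe_le F V1 (unif2_valid G) 0 s) _.
by rewrite stay_out.
Qed.

Lemma val1_ge_sel g s : is_sel1 G g -> val_sel G F g s <= Defs.val1 G F s.
Proof.
move=> Vg; apply: (sup_upperE (c := 1)); last by exists (mless g) => //; exact: mless_valid.
by move=> y [p1 V1 ->]; case/andP: (val_bnd s V1).
Qed.

Lemma val1_le1 s : Defs.val1 G F s <= 1.
Proof.
apply: ge_supE.
  exists (val_sel G F (unif_sel G) s); exists (mless (unif_sel G)) => //.
  exact/mless_valid/unif_sel_valid.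
by move=> y [p1 V1 ->]; case/andP: (val_bnd s V1).
Qed.

Lemma W1_in s : W1 G F s -> s \in F.
Proof.
rewrite /W1 => E; apply/negPn/negP => H.
have : Defs.val1 G F s <= 0.
  apply: ge_supE.
    exists (val_sel G F (unif_sel G) s); exists (mless (unif_sel G)) => //.
    exact/mless_valid/unif_sel_valid.
  by move=> y [p1 V1 ->]; rewrite val_out.
by rewrite E ler10.
Qed.

Lemma notW1_lt g s : is_sel1 G g -> ~ W1 G F s -> val_sel G F g s < 1.
Proof.
move=> Vg nW; apply: le_lt_trans (val1_ge_sel s Vg) _.
by rewrite lt_neqAle val1_le1 andbT; apply/eqP.
Qed.

Lemma delta_other s a b t : delta G s a b s = 1 -> t != s -> delta G s a b t = 0.
Proof.
move=> E ts; have := delta_sum G s a b; rewrite (bigD1 s) //= E => /eqP.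
rewrite -[X in _ == X]addr0 (inj_eq (addrI _)) => /eqP /(psumr_eq0P (fun x _ => delta_ge0 G s a b x)).
by apply.
Qed.

Lemma stay_absorb p1 p2 t n s0 h : is_strat1 G p1 -> is_strat2 G p2 ->
  absorbing G t -> t \in F -> last s0 h = t -> stay G F p1 p2 n s0 h = 1.
Proof.
move=> V1 V2 At tF; elim: n h => [|n IH] h Ht; first by rewrite stay0 // Ht.
rewrite stay_succ ?Ht // -(Pre2_const G 1 t (distr_sum (V1 s0 h)) (distr_sum (V2 s0 h))).
apply: Pre2_supp => a b t' ha hb hd; apply: IH; rewrite last_rcons.
apply/eqP; apply: contraR hd => ne; apply/eqP; apply: delta_other ne.
apply: At; [move: (distr_in (V1 s0 h) ha) | move: (distr_in (V2 s0 h) hb)]; by rewrite Ht.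
Qed.

Lemma val_absorb g t : is_sel1 G g -> absorbing G t -> t \in F -> val_sel G F g t = 1.
Proof.
move=> Vg At tF; have V1 := mless_valid Vg.
apply/le_anti/andP; split; first by case/andP: (val_bnd t V1).
apply: val_ge => p2 V2; apply: prSafe_ge => n.
by rewrite (stay_absorb (s0:=t) (h:=[::]) n V1 V2 At tF).
Qed.

Lemma LB g w : is_sel1 G g -> (forall t, 0 <= w t <= 1) -> (forall t, t \notin F -> w t = 0) ->
  (forall s, s \in F -> w s <= Pre1sel G w s (g s)) -> forall s, w s <= val_sel G F g s.
Proof.
move=> Vg wb wout wpre s; have V1 := mless_valid Vg.
have w0 : forall t, 0 <= w t by move=> t; case/andP: (wb t).
apply: val_ge => p2 V2; apply: prSafe_ge => n.
suff: forall n h, w (last s h) <= stay G F (mless g) p2 n s h by move/(_ n [::]).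
elim=> [|m IH] h; case: (boolP (last s h \in F)) => H.
- by rewrite stay0 //; case/andP: (wb (last s h)).
- by rewrite stay_out // wout.
- rewrite stay_succ //; apply: le_trans (wpre _ H) _.
  have h1 : forall x, 0 <= g (last s h) x by move=> x; exact: distr_ge0 (Vg _).
  apply: le_trans (Pre1sel_le h1 w0 (V2 s h)) _.
  apply: Pre2_le => // [x|t]; first exact: distr_ge0 (V2 s h).
  by have := IH (rcons h t); rewrite last_rcons.
- by rewrite stay_out // wout.
Qed.

Lemma PF g s : is_sel1 G g -> s \in F ->
  val_sel G F g s <= Pre1sel G (val_sel G F g) s (g s).
Proof.
move=> Vg Hs; have V1 := mless_valid Vg; set v := val_sel G F g.
apply: Pre1sel_ge => x2 D2.
apply/ler_addgt0Pr => e e0.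
have H : forall t, exists q : strategy R S M * nat,
   is_strat2 G q.1 /\ stay G F (mless g) q.1 q.2 t [::] < v t + e.
  move=> t; have : val1_strat G F (mless g) t < v t + e by rewrite ltrDl.
  case/inf_lt.
    exists (prSafe G F (mless g) (unif2 G) t); exists (unif2 G) => //.
    exact: unif2_valid.
  move=> y [q Vq ->]; case/inf_lt; first by exists (stay G F (mless g) q 0 t [::]); exists 0%N.
  by move=> z [m _ <-] hm; exists (q, m).
have [Q HQ] := choice H.
pose N := (\max_t (Q t).2)%N.
pose p2 : strategy R S M := fun s0 h => match h with
  | [::] => if s0 == s then x2 else unif2 G s0 [::]
  | t :: h' => (Q t).1 t h' end.
have V2 : is_strat2 G p2.
  move=> s0 [|t h'] /=; last exact: (HQ t).1.
  by case: eqP => [->|_]; [exact: D2 | exact: unif2_valid].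
apply: le_trans (val_le s V1 V2) _.
apply: le_trans (prSafe_le F V1 V2 N.+1 s) _.
rewrite stay_succ //.
have E : p2 s [::] = x2 by rewrite /p2 eqxx.
rewrite E; change (mless g s [::]) with (g s).
have h1 : forall x, 0 <= g s x by move=> x; exact: distr_ge0 (Vg _).
have h2 : forall x, 0 <= x2 x by move=> x; exact: distr_ge0 D2.
apply: le_trans (Pre2_le G (g := fun t => v t + e) s h1 h2 _) _.
  move=> t; rewrite stay_shift.
  rewrite (@stay_start _ _ _ G F _ _ (mless g) (Q t).1) //.
  apply: le_trans (stay_mono F V1 (HQ t).1 t [::] _) (ltW (HQ t).2).
  exact: (@leq_bigmax S (fun t => (Q t).2) t).
by rewrite Pre2_add Pre2_const // ?(distr_sum (Vg s)) ?(distr_sum D2).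
Qed.

End Val.
Section TStay.
Variables (R : realType) (V : finType) (g : tbgame V) (Fb : {set V}).
Hypothesis succ_ne : forall w, succ g w != finset.set0.

Definition tunif : tstrategy R V := fun v0 h w =>
  if w \in succ g (last v0 h) then (#|succ g (last v0 h)|%:R)^-1 else 0.

Lemma tunif_valid pl : is_tstrat g pl tunif.
Proof. move=> v0 h _; exact: unif_distr. Qed.

Variables (p1 p2 : tstrategy R V).
Hypotheses (V1 : is_tstrat g Pl1 p1) (V2 : is_tstrat g Pl2 p2).

Lemma ttrans_ge0 v0 h w : 0 <= ttrans g p1 p2 v0 h w.
Proof.
rewrite /ttrans; case E: (own g (last v0 h)).
- exact: (distr_ge0 _ (V1 E)).
- exact: (distr_ge0 _ (V2 E)).
- by case: ifP => // _; rewrite invr_ge0.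
Qed.

Lemma ttrans_sum v0 h : \sum_w ttrans g p1 p2 v0 h w = 1.
Proof.
rewrite /ttrans; case E: (own g (last v0 h)).
- exact: distr_sum (V1 E).
- exact: distr_sum (V2 E).
- exact: (distr_sum (@unif_distr R V _ (succ_ne (last v0 h)))).
Qed.

Lemma tstay_out n v0 h : last v0 h \notin Fb -> tstay g Fb p1 p2 n v0 h = 0.
Proof. by move=> H; case: n => [|n] /=; rewrite (negbTE H). Qed.

Lemma tstay0 v0 h : last v0 h \in Fb -> tstay g Fb p1 p2 0 v0 h = 1.
Proof. by move=> H /=; rewrite H. Qed.

Lemma tstay_succ n v0 h : last v0 h \in Fb ->
  tstay g Fb p1 p2 n.+1 v0 h = \sum_w ttrans g p1 p2 v0 h w * tstay g Fb p1 p2 n v0 (rcons h w).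
Proof. by move=> H /=; rewrite H. Qed.

Lemma tstay_bnd n v0 h : 0 <= tstay g Fb p1 p2 n v0 h <= 1.
Proof.
elim: n h => [|n IH] h; case: (boolP (last v0 h \in Fb)) => H;
  try by rewrite tstay_out // lexx ler01.
  by rewrite tstay0 // lexx ler01.
rewrite tstay_succ //; apply/andP; split.
  apply: conv_ge => //; [exact: ttrans_ge0 | exact: ttrans_sum |].
  by move=> w _; case/andP: (IH (rcons h w)).
apply: conv_le => //; [exact: ttrans_ge0 | exact: ttrans_sum |].
by move=> w _; case/andP: (IH (rcons h w)).
Qed.

Lemma tprSafe_le n v0 : tprSafe g Fb p1 p2 v0 <= tstay g Fb p1 p2 n v0 [::].
Proof.
apply: (inf_lowerE (c := 0)); last by exists n.
by move=> y [m _ <-]; case/andP: (tstay_bnd m v0 [::]).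
Qed.

Lemma tprSafe_ge c v0 : (forall n, c <= tstay g Fb p1 p2 n v0 [::]) -> c <= tprSafe g Fb p1 p2 v0.
Proof.
move=> H; apply: le_infE; first by exists (tstay g Fb p1 p2 0 v0 [::]); exists 0%N.
by move=> y [m _ <-].
Qed.

End TStay.

Section TShift.
Variables (R : realType) (V : finType) (g : tbgame V) (Fb : {set V}).

Definition tsh (v0 : V) (p : tstrategy R V) : tstrategy R V := fun w0 h0 => p v0 (w0 :: h0).

Lemma tstay_shift (p1 p2 : tstrategy R V) n v0 w h :
  tstay g Fb p1 p2 n v0 (w :: h) = tstay g Fb (tsh v0 p1) (tsh v0 p2) n w h.
Proof.
elim: n h => [|n IH] h //=; case: ifP => // _.
by apply: eq_bigr => x _; rewrite IH.
Qed.

Lemma tstay_start (p1 p2 q1 q2 : tstrategy R V) n w h :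
  (forall h a, p1 w h a = q1 w h a) -> (forall h a, p2 w h a = q2 w h a) ->
  tstay g Fb p1 p2 n w h = tstay g Fb q1 q2 n w h.
Proof.
move=> E1 E2; elim: n h => [|n IH] h //=; case: ifP => // _.
apply: eq_bigr => x _; rewrite IH; congr (_ * _).
by rewrite /ttrans; case: (own g _) => //; rewrite ?E1 ?E2.
Qed.

End TShift.

Lemma conv_one (R : realType) (T : finType) (w f : T -> R) x0 :
  (forall x, 0 <= w x) -> \sum_x w x = 1 -> (forall x, f x <= 1) ->
  1 <= \sum_x w x * f x -> 0 < w x0 -> 1 <= f x0.
Proof.
move=> w0 w1 f1 H wp.
have E : \sum_x w x * (1 - f x) <= 0.
  under eq_bigr => x _ do rewrite mulrBr mulr1.
  by rewrite sumrB w1 subr_le0.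
have : w x0 * (1 - f x0) <= 0.
  apply: le_trans E; rewrite (bigD1 x0) //= lerDl.
  by apply: sumr_ge0 => x _; rewrite mulr_ge0 // subr_ge0.
by rewrite pmulr_rle0 // subr_le0.
Qed.
Lemma ttrans_Pl1 (R : realType) (V : finType) (g : tbgame V) (p1 p2 : tstrategy R V) v0 h w :
  own g (last v0 h) = Pl1 -> ttrans g p1 p2 v0 h w = p1 v0 h w.
Proof. by rewrite /ttrans => ->. Qed.

Section TBspec.
Variables (R : realType) (S M : finType) (G : cgs R S M) (v : S -> R) (F : {set S}).
Local Notation g := (TBgame G v).
Local Notation Fb := (TBsafe M F).
Local Notation V := (TBV S M).

Lemma tb_succ_ne w : succ g w != finset.set0.
Proof.
rewrite /= /tb_succ; case: ifP => [_|/negbT //].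
by apply/set0Pn; exists w; exact: set11.
Qed.

Lemma tb_succ_raw_eq w x : x \in tb_succ_raw G v w -> tb_succ G v w = tb_succ_raw G v w.
Proof. move=> H; rewrite /tb_succ; case: eqP => // E; by move: H; rewrite E inE. Qed.

Lemma inFb1 s : ((inl (inl s) : V) \in Fb) = (s \in F). Proof. by rewrite inE. Qed.
Lemma inFb2 s A B : ((inl (inr (s, A, B)) : V) \in Fb) = (s \in F). Proof. by rewrite inE. Qed.
Lemma inFb3 s A b : ((inr (s, A, b) : V) \in Fb) = (s \in F). Proof. by rewrite inE. Qed.

Lemma tunifV pl : is_tstrat g pl (tunif R g).
Proof. move=> v0 h E; exact: (@tunif_valid R V g tb_succ_ne pl v0 h E). Qed.

Lemma TB1 s : as_win R g Fb (inl (inl s)) -> s \in F.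
Proof.
case=> p1 V1 W; have := W (tunif R g) (@tunifV Pl2).
apply: contra_eqT => H.
have : tprSafe g Fb p1 (tunif R g) (inl (inl s)) <= 0.
  have Z : forall n, tstay g Fb p1 (tunif R g) n (inl (inl s)) [::] = 0.
    by move=> n; rewrite tstay_out //= inFb1.
  apply: (inf_lowerE (c := 0)); last by exists 0%N => //; rewrite Z.
  by move=> y [n _ <-]; rewrite Z.
by move=> le0; apply/eqP => E; move: le0; rewrite E ler10.
Qed.

Lemma TB_succ1 s s' A B : (inl (inr (s', A, B)) : V) \in succ g (inl (inl s)) -> s' = s.
Proof.
rewrite /= /tb_succ; case: ifP => _; rewrite inE //.
by case/andP => /eqP.
Qed.

Lemma TB_closed (f : V -> V) s A B b a t :
  pm_as_winning R g Fb (as_win R g Fb) f -> as_win R g Fb (inl (inl s)) ->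
  f (inl (inl s)) = inl (inr (s, A, B)) -> b \in B -> a \in A -> 0 < delta G s a b t ->
  as_win R g Fb (inl (inl t)).
Proof.
move=> [fsucc fwin] Ws Ef bB aA dpos.
have sF := TB1 Ws.
pose X : V := inl (inr (s, A, B)); pose Y : V := inr (s, A, b).
have YX : Y \in succ g X.
  have H : Y \in tb_succ_raw G v X by rewrite inE /= !eqxx bB.
  by rewrite /= (tb_succ_raw_eq H).
have tY : (inl (inl t) : V) \in succ g Y.
  have H : (inl (inl t) : V) \in tb_succ_raw G v Y.
    by rewrite inE; apply/existsP; exists a; rewrite aA dpos.
  by rewrite /= (tb_succ_raw_eq H).
have Vf : is_tstrat g Pl1 (pm_strat R f).
  move=> v0 h E; apply: ptmass_distr; exact: fsucc.
exists (pm_strat R f) => // p2' V2'.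
pose p2 : tstrategy R V := fun v0 h => match h with
  | x1 :: x2 :: x3 :: h' => p2' x3 h'
  | [:: x1] => if x1 == X then (fun w => if w == Y then 1 else 0) else tunif R g v0 h
  | _ => tunif R g v0 h end.
have V2 : is_tstrat g Pl2 p2.
  move=> v0 [|x1 [|x2 [|x3 h']]] E.
  - exact: (@tunifV Pl2 _ _ E).
  - rewrite /p2; case: eqP => [Ex|_]; last exact: (@tunifV Pl2 _ _ E).
    rewrite /= Ex; exact: ptmass_distr.
  - exact: (@tunifV Pl2 _ _ E).
  - exact: (V2' x3 h' E).
have Ws' := fwin _ Ws p2 V2.
apply/le_anti/andP; split.
  apply: le_trans (tprSafe_le Fb tb_succ_ne Vf V2' 0 _) _.
  by case/andP: (tstay_bnd Fb tb_succ_ne Vf V2' 0 (inl (inl t)) [::]).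
apply: tprSafe_ge => n.
have H1 : 1 <= tstay g Fb (pm_strat R f) p2 n.+3 (inl (inl s)) [::].
  by rewrite -Ws'; apply: (tprSafe_le Fb tb_succ_ne Vf V2).
have E1 : tstay g Fb (pm_strat R f) p2 n.+3 (inl (inl s)) [::] =
          tstay g Fb (pm_strat R f) p2 n.+2 (inl (inl s)) [:: X].
  rewrite tstay_succ; last by rewrite inFb1.
  rewrite (eq_bigr (fun w => (if w == X then 1 else 0) *
       tstay g Fb (pm_strat R f) p2 n.+2 (inl (inl s)) (rcons [::] w))).
    by rewrite sum_ptmass.
  by move=> w _; congr (_ * _); rewrite /ttrans /= /pm_strat /= Ef.
have E2 : tstay g Fb (pm_strat R f) p2 n.+2 (inl (inl s)) [:: X] =
          tstay g Fb (pm_strat R f) p2 n.+1 (inl (inl s)) [:: X; Y].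
  rewrite tstay_succ; last by rewrite /= inFb2.
  rewrite (eq_bigr (fun w => (if w == Y then 1 else 0) *
       tstay g Fb (pm_strat R f) p2 n.+1 (inl (inl s)) (rcons [:: X] w))).
    by rewrite sum_ptmass.
  by move=> w _; congr (_ * _); rewrite /ttrans /= eqxx.
rewrite E1 E2 tstay_succ in H1; last by rewrite /= inFb3.
move: H1.
rewrite (eq_bigr (fun w => ttrans g (pm_strat R f) p2 (inl (inl s)) [:: X; Y] w *
      tstay g Fb (pm_strat R f) p2' n w [::])); last first.
  move=> w _; congr (_ * _); rewrite /= !tstay_shift.
  by apply: tstay_start.
move=> H1; apply: (conv_one _ _ _ H1).
- by move=> w; exact: ttrans_ge0 Vf V2 _ _ w.
- exact: (ttrans_sum tb_succ_ne Vf V2 (inl (inl s)) [:: X; Y]).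
- by move=> w; case/andP: (tstay_bnd Fb tb_succ_ne Vf V2' n w [::]).
- rewrite /ttrans /= tY invr_gt0 ltr0n lt0n cards_eq0.
  exact: (tb_succ_ne Y).
Qed.

End TBspec.
Lemma fin_pos_min (R : realType) (T : finType) (h : T -> R) :
  exists2 e, 0 < e & forall x, 0 < h x -> e <= h x.
Proof.
suff: forall l : seq T, exists2 e, 0 < e & forall x, x \in l -> 0 < h x -> e <= h x.
  by case/(_ (enum T)) => e e0 H; exists e => // x; apply: H; rewrite mem_enum.
elim=> [|y l [e e0 IH]]; first by exists 1.
case: (ltrP 0 (h y)) => hy.
  exists (Num.min e (h y)); first by rewrite lt_min e0.
  move=> x; rewrite in_cons => /orP [/eqP -> _|xl hx]; rewrite ge_min.
    by rewrite lexx orbT.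
  by rewrite IH.
exists e => // x; rewrite in_cons => /orP [/eqP -> hx|]; last exact: IH.
by move: hy; rewrite leNgt hx.
Qed.

Unset Implicit Arguments.
Set Strict Implicit.

Theorem theorem6 (R : realType) (S M : finType) (G : cgs R S M) (F : {set S})
    (gam : nat -> selector R S M) (i : nat) :
  (forall s, W1 G F s \/ s \notin F -> absorbing G s) ->
  gam 0%N = unif_sel G ->
  (forall k, (k <= i)%N -> alg_step G F (gam k) (gam k.+1)) ->
  gam i <> gam i.+1 ->
  (forall s, val_sel G F (gam i) s <= val_sel G F (gam i.+1) s) /\
  (exists s, val_sel G F (gam i) s < val_sel G F (gam i.+1) s).
Proof.
move=> Habs H0 Hstep _.
have valid : forall k, (k <= i.+1)%N -> is_sel1 G (gam k).
  elim=> [|k IH] hk; first by rewrite H0; exact: unif_sel_valid.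
  have Vk := IH (ltnW hk).
  case: (Hstep k hk) => [[_ [HI Hn]]|[_ [f /= [_ _ Hn HU]]]] s.
    case: (EM (Iset G F (gam k) s)) => Is; first exact: (HI s Is).1.
    by rewrite Hn //; exact: Vk.
  case: (EM (as_win R (TBgame G (val_sel G F (gam k))) (TBsafe M F) (inl (inl s))
             /\ ~ W1 G F s)) => Us; last by rewrite Hn //; exact: Vk.
  move: (HU s Us); case: (f _) => [[?|[[? ?] ?]]|?] //.
  by case=> [[D _] _ _].
have Vg := valid i (leqnSn i); have Vg' := valid i.+1 (leqnn _).
set g := gam i; set g' := gam i.+1.
set v := val_sel G F g.
have V1 := mless_valid Vg.
have vb : forall t, 0 <= v t <= 1 by move=> t; exact: val_bnd.
have v0 : forall t, 0 <= v t by move=> t; case/andP: (vb t).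
have v1 : forall t, v t <= 1 by move=> t; case/andP: (vb t).
have vout : forall t, t \notin F -> v t = 0 by move=> t; exact: val_out.
have vPF : forall s, s \in F -> v s <= Pre1sel G v s (g s) by move=> s; exact: PF.
have vPre1 : forall s, s \in F -> v s <= Pre1 G v s.
  by move=> s sF; apply: le_trans (vPF s sF) (Pre1_ge (Vg s) vb).
have g'0 : forall s a, 0 <= g' s a by move=> s a; exact: distr_ge0 (Vg' s).
case: (Hstep i (leqnn i)) => [[[s0 Is0] [HI Hn]]|[_ [f /= [Hpm [s0 Us0] Hn HU]]]].
  have cond : forall s, s \in F -> v s <= Pre1sel G v s (g' s).
    move=> s sF; case: (EM (Iset G F g s)) => Is.
      by rewrite (HI s Is).2; case: Is => _ _ /ltW.
    by rewrite /g' Hn //; exact: vPF.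
  have partA : forall s, v s <= val_sel G F g' s.
    by apply: LB => //.
  split => //.
  case: Is0 => nW s0F lt0.
  have vlt1 := notW1_lt Vg nW.
  pose beta := Num.min (Pre1 G v s0 - v s0) (1 - v s0).
  have beta0 : 0 < beta by rewrite lt_min !subr_gt0 lt0 vlt1.
  pose w t := if t == s0 then v t + beta else v t.
  have vw : forall t, v t <= w t.
    by move=> t; rewrite /w; case: eqP => // _; rewrite lerDl ltW.
  have LBw := LB (F := F) (w := w) Vg'.
  exists s0; apply: (lt_le_trans _ (LBw _ _ _ s0)).
  - by rewrite /w eqxx ltrDl.
  - move=> t; rewrite /w; case: eqP => [->|_]; last exact: vb.
    rewrite addr_ge0 ?v0 ?(ltW beta0) //=.
    by rewrite -lerBrDl ge_min lexx orbT.
  - move=> t tF; rewrite /w; case: eqP => [E|_]; last exact: vout.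
    by move: tF; rewrite E s0F.
  - move=> s sF; apply: le_trans (Pre1sel_mono G s (g'0 s) v0 vw).
    rewrite /w; case: eqP => [->|_]; last exact: cond.
    rewrite (HI s0 _).2; last by split.
    by rewrite -lerBrDl ge_min lexx.
pose U s := as_win R (TBgame G v) (TBsafe M F) (inl (inl s)) /\ ~ W1 G F s.
have UF : forall s, U s -> s \in F by move=> s [Ws _]; exact: TB1 Ws.
have Winfo : forall s, U s -> exists A B,
   [/\ f (inl (inl s)) = inl (inr (s, A, B)), OptSel G v s (g' s),
        supp (g' s) = A & CountOpt G v s (g' s) = B].
  move=> s Us; move: (HU s Us) (Hpm.1 (inl (inl s)) erefl).
  case E: (f (inl (inl s))) => [[?|[[s' A] B]]|?] //= [O SA CB] fs.
  have ss := TB_succ1 fs; subst s'.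
  by exists A, B; split.
have [eta eta0 Heta] :=
  fin_pos_min (fun p : S * M => Pre2 G v p.1 (g' p.1) (ptmass R p.2) - v p.1).
pose al := Num.min eta 1.
have al0 : 0 < al by rewrite lt_min eta0 ltr01.
have al1 : al <= 1 by rewrite ge_min lexx orbT.
have aleta : al <= eta by rewrite ge_min lexx.
pose w t := if `[< U t >] then v t + al * (1 - v t) else v t.
have wU : forall t, U t -> w t = v t + al * (1 - v t) by move=> t Ut; rewrite /w asboolT.
have wnU : forall t, ~ U t -> w t = v t by move=> t Ut; rewrite /w asboolF.
have wW : forall t, U t \/ W1 G F t -> w t = v t + al * (1 - v t).
  move=> t [Ut|Wt]; first exact: wU.
  case: (EM (U t)) => Ut; first exact: wU.
  rewrite wnU //.
  have -> : v t = 1 by exact: (val_absorb Vg (Habs t (or_introl Wt)) (W1_in Wt)).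
  by rewrite subrr mulr0 addr0.
have vw : forall t, v t <= w t.
  move=> t; case: (EM (U t)) => Ut; last by rewrite wnU.
  by rewrite wU // lerDl mulr_ge0 ?(ltW al0) // subr_ge0.
have w01 : forall t, 0 <= w t <= 1.
  move=> t; rewrite (le_trans (v0 t) (vw t)) /=.
  case: (EM (U t)) => Ut; last by rewrite wnU.
  by rewrite wU // -lerBrDl ler_piMl // subr_ge0.
have wout : forall t, t \notin F -> w t = 0.
  move=> t tF; rewrite wnU ?vout // => Ut; by move: tF; rewrite UF.
have Key : forall s b, U s -> b \in mov2 G s -> w s <= Pre2 G w s (g' s) (ptmass R b).
  move=> s b Us bm; have sF := UF s Us.
  have [A [B [Ef O SA CB]]] := Winfo s Us.
  have Pt : distr_on (mov2 G s) (ptmass R b) by exact: ptmass_distr.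
  have Ds := Vg' s.
  have Pmono : Pre2 G v s (g' s) (ptmass R b) <= Pre2 G w s (g' s) (ptmass R b).
    by apply: Pre2_le => // x; exact: distr_ge0 Pt.
  case: (boolP (b \in B)) => bB.
    rewrite (Pre2_supp (g := fun t => (1 - al) * v t + al)); last first.
      move=> a b' t ha hb hd.
      have b'b : b' = b by move: hb; rewrite /ptmass; case: (eqVneq b' b) => // _; rewrite eqxx.
      subst b'.
      have aA : a \in A by rewrite -SA inE.
      have dpos : 0 < delta G s a b t by rewrite lt_def hd delta_ge0.
      have Wt := TB_closed Hpm Us.1 Ef bB aA dpos.
      rewrite wW; first by ring.
      by case: (EM (W1 G F t)) => W; [right | left].
    rewrite Pre2_affine ?(distr_sum Ds) ?(distr_sum Pt) //.
    have -> : Pre2 G v s (g' s) (ptmass R b) = Pre1 G v s.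
      by move: bB; rewrite -CB inE => /andP [_ /eqP].
    have -> : w s = (1 - al) * v s + al by rewrite wU //; ring.
    by rewrite lerD2r ler_wpM2l ?subr_ge0 ?vPre1.
  have hpre : Pre1 G v s <= Pre2 G v s (g' s) (ptmass R b).
    by rewrite -O.2; apply: Pre1sel_le.
  have hne : Pre2 G v s (g' s) (ptmass R b) != Pre1 G v s.
    by apply: contraNneq bB => E; rewrite -CB inE bm E eqxx.
  have gap0 : 0 < Pre2 G v s (g' s) (ptmass R b) - v s.
    by rewrite subr_gt0; apply: le_lt_trans (vPre1 s sF) _; rewrite lt_def hne hpre.
  have := Heta (s, b) gap0 => /= He.
  apply: le_trans _ Pmono; rewrite wU // -lerBrDl.
  apply: le_trans He; apply: le_trans aleta.
  by rewrite ler_piMr ?(ltW al0) // gerBl v0.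
have pre : forall s, s \in F -> w s <= Pre1sel G w s (g' s).
  move=> s sF; case: (EM (U s)) => Us.
    apply: Pre1sel_ge => x2 D2; rewrite Pre2_pt.
    apply: conv_ge => [x||b hb]; first exact: distr_ge0 D2.
      exact: distr_sum D2.
    by apply: Key => //; exact: distr_in D2 hb.
  rewrite wnU // /g' Hn //; apply: le_trans (vPF s sF) _.
  by apply: Pre1sel_mono => // x; exact: distr_ge0 (Vg s).
have LBw := LB (F := F) (w := w) Vg' w01 wout pre.
split; first by move=> s; exact: le_trans (vw s) (LBw s).
exists s0; apply: (lt_le_trans _ (LBw s0)).
rewrite wU // ltrDl mulr_gt0 // subr_gt0.
by apply: notW1_lt Vg _; case: Us0.
Qed.
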